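(* Let $\mathcal G$ be a DAG with vertex set $\mathbf V$, $\mathbf Y\subseteq\mathbf V$, and $\eta_{\mathfrak a_{\boldsymbol\alpha}}$ an edge intervention that is node consistent for $\mathbf Y$. Then (in any causal structure for $\mathcal G$) $p(\mathbf Y(\mathfrak a_{\boldsymbol\alpha}))=p(\mathbf Y(\mathbf a_{\boldsymbol\alpha}))$, where $\mathbf a_{\boldsymbol\alpha}$ is the induced node intervention.
   Context: Let $\mathcal G$ be a DAG with finite vertex set $\mathbf V$; vertices are random variables with state spaces $\mathfrak X_V$; $\mathfrak X_{\mathbf A}=\prod_{A\in\mathbf A}\mathfrak X_A$; $\mathrm{pa}(V)$ are parents. A causal structure is a collection of one-step potential outcomes $V(\mathbf b)$, $\mathbf b\in\mathfrak X_{\mathrm{pa}(V)}$, with a joint distribution. Node interventions: $V(\mathbf a)=V(\mathbf a_{\mathrm{pa}(V)\cap\mathbf A},\{W(\mathbf a):W\in\mathrm{pa}(V)\setminus\mathbf A\})$ recursively. Edge interventions: for an edge set $\boldsymbol\alpha$, $\mathfrak a\in\mathfrak X_{\boldsymbol\alpha}=\prod_{(AB)\in\boldsymbol\alpha}\mathfrak X_A$ assigns each edge a value of its source; $V(\mathfrak a)=V(\mathfrak a_{\{(WV)\in\boldsymbol\alpha\}},\{W(\mathfrak a):W\in\mathrm{pa}(V),(WV)\notin\boldsymbol\alpha\})$ recursively. A directed path $\beta$ (sequence of distinct vertices joined by directed edges) with sink in $\mathbf Y$ is relevant for $\mathbf Y$ given $\boldsymbol\alpha$ if no edge of $\boldsymbol\alpha$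 lies on $\beta$ except possibly its first edge; $\mathrm{rel}_{\mathcal G}(\mathbf Y\mid\boldsymbol\alpha)$ is their set. $\boldsymbol\alpha$ is live for $\mathbf Y$ if each of its edges is the first edge of some relevant path. $\boldsymbol\alpha$ live for $\mathbf Y$ is consistent for $\mathbf Y$ if for every vertex $A$, the set of first edges of relevant paths with source $A$ is disjoint from or contained in $\boldsymbol\alpha$. $\eta_{\mathfrak a}$ is node consistent for $\mathbf Y$ if $\boldsymbol\alpha$ is live and consistent for $\mathbf Y$ and for every vertex $A$ all edges of $\boldsymbol\alpha$ with source $A$ get the same value; the induced node intervention $\mathbf a_{\boldsymbol\alpha}$ sets each source vertex $A$ of an edge in $\boldsymbol\alpha$ to that common value. *)

(* Defs.v *)
From mathcomp Require Import all_boot all_order all_algebra.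
From mathcomp Require Import classical_sets reals ereal measure probability.

Set Implicit Arguments.
Unset Strict Implicit.
Unset Printing Implicit Defensive.
Local Open Scope classical_set_scope.

Section CausalDAG.

(* Vertices: a finite type V; the DAG is given by its edge relation G
   (G w v means there is a directed edge w -> v, i.e. w is a parent of v). *)
Variables (V : finType) (G : rel V).

Definition acyclic : Prop := forall w v : V, G w v -> ~~ connect G v w.

Definition edges : {set V * V} := [set e | G e.1 e.2].

Definition dpath (s : seq V) : bool :=
  match s with
  | [::] => false
  | x :: s' => path G x s' && uniq s
  end.

Definition path_edges (s : seq V) : seq (V * V) := zip s (behead s).

Definition first_edge (s : seq V) : option (V * V) :=
  match s with
  | x :: y :: _ => Some (x, y)
  | _ => None
  end.

Definition relevant (Y : {set V}) (alpha : {set V * V}) (s : seq V) : bool :=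
  match s with
  | [::] => false
  | x :: s' => [&& dpath s, last x s' \in Y &
                   all (fun e => e \notin alpha) (behead (path_edges s))]
  end.

Definition live (Y : {set V}) (alpha : {set V * V}) : Prop :=
  forall e, e \in alpha ->
    exists s, relevant Y alpha s /\ first_edge s = Some e.

Definition rel_first_edges (Y : {set V}) (alpha : {set V * V}) (A : V)
  : set (V * V) :=
  [set e | e.1 = A /\ exists s, relevant Y alpha s /\ first_edge s = Some e].

Definition consistent (Y : {set V}) (alpha : {set V * V}) : Prop :=
  live Y alpha /\
  forall A : V,
    (rel_first_edges Y alpha A `&` [set e | e \in alpha] = set0) \/
    (rel_first_edges Y alpha A `<=` [set e | e \in alpha]).

Variable X : V -> Type.

(* An edge intervention value: frak_a assigns to each edge (A,B) of alpha a
   value of its source A (it is a total function, only its values on alpha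
   matter). *)
Definition edge_value := forall e : V * V, X e.1.

Definition node_consistent (Y : {set V}) (alpha : {set V * V})
  (fa : edge_value) : Prop :=
  consistent Y alpha /\
  forall A B B' : V, (A, B) \in alpha -> (A, B') \in alpha ->
    fa (A, B) = fa (A, B').

(* Induced node intervention: the set of sources of edges in alpha, ... *)
Definition induced_nodes (alpha : {set V * V}) : {set V} :=
  [set A | [exists B, (A, B) \in alpha]].

(* ... each set to the common value of its edges (default x0 elsewhere,
   irrelevant since only values on induced_nodes are used). *)
Definition induced_value (x0 : forall v, X v) (alpha : {set V * V})
  (fa : edge_value) : forall v, X v :=
  fun A => match [pick B | (A, B) \in alpha] with
           | Some B => fa (A, B)
           | None => x0 A
           end.

(* A causal structure over a sample space Omega: for each vertex v, the
   one-step potential outcomes v(b), b ranging over values of pa(v). *)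
Variable Omega : Type.
Definition causal_structure :=
  forall v : V, Omega -> (forall w : {w : V | G w v}, X (proj1_sig w)) -> X v.

Variable pot : causal_structure.

(* An "override" ov w v = Some x means: in the recursion, the parent w of v
   is set to x; None means w's own (recursively defined) counterfactual is
   used. *)
Definition step (ov : forall w v : V, option (X w)) (om : Omega)
  (f : forall v, X v) : forall v, X v :=
  fun v => @pot v om (fun w => match ov (proj1_sig w) v with
                              | Some x => x
                              | None => f (proj1_sig w)
                              end).

(* The recursively defined counterfactuals: on a DAG the recursion
   terminates after at most #|V| unfoldings, so #|V| iterations of the
   structural map from any starting point x0 give the recursive solution. *)
Definition counterfactual (x0 : forall v, X v)
  (ov : forall w v : V, option (X w)) (om : Omega) : forall v, X v :=
  iter #|V| (step ov om) x0.

(* Node intervention A := a : V(a) = V(a_{pa(V) cap A}, {W(a) : W in pa(V)\A}) *)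
Definition node_ov (A : {set V}) (a : forall v, X v) : forall w v : V, option (X w) :=
  fun w v => if w \in A then Some (a w) else None.

(* Edge intervention alpha := frak_a :
   V(frak_a) = V(frak_a_{(WV) in alpha}, {W(frak_a) : (WV) notin alpha}) *)
Definition edge_ov (alpha : {set V * V}) (fa : edge_value)
  : forall w v : V, option (X w) :=
  fun w v => if (w, v) \in alpha then Some (fa (w, v)) else None.

Definition restrict (Y : {set V}) (f : forall v, X v)
  : forall y : {y : V | y \in Y}, X (proj1_sig y) :=
  fun y => f (proj1_sig y).

End CausalDAG.
Arguments restrict [V X] Y f y.

(* Main.v *)
Require Import Defs.
From mathcomp Require Import all_boot all_order all_algebra.
From mathcomp Require Import classical_sets reals ereal measure probability.
From mathcomp Require Import boolp.
Local Open Scope classical_set_scope.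

Definition goodv (V : finType) (G : rel V) (Y : {set V}) (alpha : {set V * V}) (v : V) :=
  exists s, [&& dpath G (v :: s), last v s \in Y &
               all (fun e => e \notin alpha) (path_edges (v :: s))].

Lemma good_ext (V : finType) (G : rel V) (Y : {set V}) (alpha : {set V * V}) w v s :
  acyclic G -> G w v ->
  [&& dpath G (v :: s), last v s \in Y &
      all (fun e => e \notin alpha) (path_edges (v :: s))] ->
  [&& dpath G (w :: v :: s), last w (v :: s) \in Y &
      all (fun e => e \notin alpha) (behead (path_edges (w :: v :: s)))] /\
  ((w, v) \notin alpha ->
  [&& dpath G (w :: v :: s), last w (v :: s) \in Y &
      all (fun e => e \notin alpha) (path_edges (w :: v :: s))]).
Proof.
move=> Hac Gwv /and3P [Hp Hl Ha].
have Hwn : w \notin v :: s.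
  apply/negP => Hin.
  move: Hp => /= /andP [Hp _].
  have := path_connect Hp Hin.
  by move: (Hac _ _ Gwv) => /negP.
have Hd : dpath G (w :: v :: s).
  move: Hp => /= /andP [-> Hu]; by rewrite Gwv /= Hwn Hu.
split.
  by rewrite Hd /= Hl.
move=> Hwv. by rewrite Hd /= Hl /= Hwv.
Qed.

Theorem lemma11 (V : finType) (G : rel V) (X : V -> Type)
  (x0 : forall v, X v)
  (d : measure_display) (Omega : measurableType d) (R : realType)
  (P : probability Omega R) (pot : causal_structure G X Omega)
  (Y : {set V}) (alpha : {set V * V}) (fa : edge_value X) :
  acyclic G ->
  alpha \subset edges G ->
  node_consistent G Y alpha fa ->
  forall E : set (forall y : {y : V | y \in Y}, X (proj1_sig y)),
    P [set om : Omega | E (restrict Y (counterfactual pot x0 (edge_ov alpha fa) om))]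
    = P [set om : Omega | E (restrict Y (counterfactual pot x0
           (node_ov (induced_nodes alpha) (induced_value x0 alpha fa)) om))].
Proof.
move=> Hac _ [[Hlive Hcons] Hval] E.
have key : forall om n v, @goodv V G Y alpha v ->
    iter n (step pot (edge_ov alpha fa) om) x0 v =
    iter n (step pot (node_ov (induced_nodes alpha) (induced_value x0 alpha fa)) om) x0 v.
  move=> om n; elim: n => [//|n IH] v [s Hs] /=.
  rewrite /step; congr (pot _ _); apply: functional_extensionality_dep => -[w Gwv] /=.
  have [Hrel Hgood] := @good_ext V G Y alpha w v s Hac Gwv Hs.
  rewrite /edge_ov /node_ov.
  case: ifP => Hwv.
    have Hw : w \in induced_nodes alpha.
      by rewrite inE; apply/existsP; exists v.
    rewrite Hw /induced_value.
    case: pickP => [B HB|Hn]; last by move: (Hn v); rewrite Hwv.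
    by rewrite (Hval _ _ _ HB Hwv).
  have Hw : w \notin induced_nodes alpha.
    apply/negP; rewrite inE => /existsP [B HB].
    have [s0 [Hs0 Hf0]] := Hlive _ HB.
    have HinB : rel_first_edges G Y alpha w (w, B) by split => //; exists s0.
    have Hinv : rel_first_edges G Y alpha w (w, v).
      by split => //; exists [:: w, v & s].
    case: (Hcons w) => [H0|Hsub].
      have : (rel_first_edges G Y alpha w `&` [set e | e \in alpha]) (w, B) by [].
      by rewrite H0.
    by move: (Hsub _ Hinv) => /=; rewrite Hwv.
  rewrite (negbTE Hw); apply: IH.
  exists [:: v & s]; exact: Hgood (negbT Hwv).
congr (P _); apply: funext => om /=.
suff -> : restrict Y (counterfactual pot x0 (edge_ov alpha fa) om) =
  restrict Y (counterfactual pot x0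
           (node_ov (induced_nodes alpha) (induced_value x0 alpha fa)) om) by [].
apply: functional_extensionality_dep => -[y Hy].
rewrite /restrict /counterfactual /=; apply: key.
by exists [::]; rewrite /= Hy.
Qed.
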